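(* Let $H$ be a real or complex Hilbert space of dimension $n$, let $N\ge n$, let $F=\{f_i\}_{i=1}^N$ be a frame for $H$ with frame operator $S_F$, and let $\{q_i\}_{i=1}^N$ be a weight number sequence. Set $c=\max\{q_i\|f_i\|\,\|S_F^{-1}f_i\|:1\le i\le N\}$, $\varrho_1=\{i:q_i\|f_i\|\,\|S_F^{-1}f_i\|=c\}$, $\varrho_2=\{1,\dots,N\}\setminus\varrho_1$, and $H_j=\operatorname{span}\{f_i:i\in\varrho_j\}$ for $j=1,2$. If $H_1\cap H_2=\{0\}$, then the canonical dual $\{S_F^{-1}f_i\}_{i=1}^N$ is a 1-erasure probabilistic optimal dual of $F$.
   Context: Inner products are linear in the first argument. A frame for $H$ is a finite sequence spanning $H$. Analysis operator: $\Theta_F f=(\langle f,f_i\rangle)_i$. Synthesis operator: $\Theta_G^*(c)=\sum_ic_ig_i$. Frame operator: $S_F=\Theta_F^*\Theta_F$. A dual of $F$ is a frame $G=\{g_i\}_{i=1}^N$ with $f=\sum_i\langle f,f_i\rangle g_i=\sum_i\langle f,g_i\rangle f_i$ for all $f$. A probability sequence satisfies $0\le p_i\le1$ and $\sum p_i=1$. Weight numbers: $q_i=\frac{\sum_jp_j}{\sum_jp_j-p_i}\cdot\frac{N-1}{n}$ (assumed well defined). $\mathcal{D}_1^p$ is the set of $N\times N$ diagonal matrices with exactly one nonzero diagonal entry, equal to $q_i$ in position $(i,i)$. $d_1^p(F,G)=\max\{\|\Theta_G^*D\Theta_F\|:D\in\mathcal{D}_1^p\}$ (operator norm); this equals $\max_i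 q_i\|f_i\|\,\|g_i\|$. A dual $G$ of $F$ is a 1-erasure probabilistic optimal dual of $F$ if $d_1^p(F,G)=\inf\{d_1^p(F,G'):G'\text{ a dual of }F\}$. *)

(* Defs.v *)
(* A Hilbert space of dimension n over K is modelled by the
   coordinate space 'rV[K]_n with the standard inner product
   <x, y> = \sum_k x_k * cj (y_k)  (linear in the first argument).
   Real case: K : rcfType, cj = id, sq = Num.sqrt.
   Complex case: K : numClosedFieldType, cj = Num.conj, sq = sqrtC. *)
From mathcomp Require Import all_boot all_order all_algebra.
Set Implicit Arguments.
Unset Strict Implicit.
Unset Printing Implicit Defensive.
Import Order.TTheory GRing.Theory Num.Theory.
Local Open Scope ring_scope.

Section FrameDefs.
Variables (K : numFieldType) (cj : K -> K) (sq : K -> K).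
Variables (n N : nat).

Definition inner (x y : 'rV[K]_n) : K := \sum_(k < n) x 0 k * cj (y 0 k).

Definition vnorm (x : 'rV[K]_n) : K := sq (inner x x).

Definition is_frame (F : 'I_N -> 'rV[K]_n) : Prop :=
  (\sum_(i < N) <<F i>> == 1%:M)%MS.

Definition analysis (F : 'I_N -> 'rV[K]_n) (x : 'rV[K]_n) : 'I_N -> K :=
  fun i => inner x (F i).

Definition synthesis (G : 'I_N -> 'rV[K]_n) (c : 'I_N -> K) : 'rV[K]_n :=
  \sum_(i < N) c i *: G i.

(* frame operator S_F = Theta_F^* Theta_F, as a matrix acting on the right:
   x *m frame_mx F = \sum_i <x, f_i> f_i *)
Definition frame_mx (F : 'I_N -> 'rV[K]_n) : 'M[K]_n :=
  \sum_(i < N) (map_mx cj (F i))^T *m F i.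

Definition canonical_dual (F : 'I_N -> 'rV[K]_n) : 'I_N -> 'rV[K]_n :=
  fun i => F i *m invmx (frame_mx F).

Definition is_dual (F G : 'I_N -> 'rV[K]_n) : Prop :=
  is_frame G /\
  forall f : 'rV[K]_n,
    f = synthesis G (analysis F f) /\ f = synthesis F (analysis G f).

Definition prob_seq (p : 'I_N -> K) : Prop :=
  (forall i, 0 <= p i <= 1) /\ \sum_(i < N) p i = 1.

(* q is the weight number sequence of some probability sequence p
   (assumed well defined: n <> 0 and \sum_j p_j - p_i <> 0) *)
Definition weight_numbers (q : 'I_N -> K) : Prop :=
  exists p : 'I_N -> K, prob_seq p /\ (0 < n)%N /\
    forall i, (\sum_(j < N) p j) - p i != 0 /\
      q i = (\sum_(j < N) p j) / ((\sum_(j < N) p j) - p i)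
            * ((N - 1)%:R / n%:R).

(* d_1^p(F,G) = max_i q_i ||f_i|| ||g_i||  (the operator-norm maximum over
   D_1^p, in the closed form given in the paper) *)
Definition d1 (q : 'I_N -> K) (F G : 'I_N -> 'rV[K]_n) : K :=
  \big[Num.max/0]_(i < N) (q i * vnorm (F i) * vnorm (G i)).

Definition prob_optimal_dual (q : 'I_N -> K) (F G : 'I_N -> 'rV[K]_n) : Prop :=
  is_dual F G /\
  forall G' : 'I_N -> 'rV[K]_n, is_dual F G' -> d1 q F G <= d1 q F G'.

Definition span_of (F : 'I_N -> 'rV[K]_n) (A : {set 'I_N}) : 'M[K]_n :=
  (\sum_(i in A) <<F i>>)%MS.

Definition prop4p1_claim (q : 'I_N -> K) (F : 'I_N -> 'rV[K]_n) : Prop :=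
  let g := canonical_dual F in
  let c := \big[Num.max/0]_(i < N) (q i * vnorm (F i) * vnorm (g i)) in
  let rho1 := [set i : 'I_N | q i * vnorm (F i) * vnorm (g i) == c] in
  let rho2 := ~: rho1 in
  (span_of F rho1 :&: span_of F rho2 == (0 : 'M[K]_n))%MS ->
  prob_optimal_dual q F g.

End FrameDefs.

(* Main.v *)
Require Import Defs.
From mathcomp Require Import all_boot all_order all_algebra.
Set Implicit Arguments. Unset Strict Implicit. Unset Printing Implicit Defensive.
Import Order.TTheory GRing.Theory Num.Theory.
Local Open Scope ring_scope.

Section MaxL.
Variable K : numFieldType.
Variable I : eqType.
Variable T : I -> K.
Hypothesis T0 : forall i, 0 <= T i.

Lemma max_facts (x y : K) : 0 <= x -> 0 <= y ->
  [/\ x <= Num.max x y, y <= Num.max x y & 0 <= Num.max x y].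
Proof.
move=> hx hy; rewrite maxElt; case: ifP => hxy.
  by split => //; apply: ltW.
have hyx : y <= x by rewrite real_leNgt ?ger0_real // hxy.
by split.
Qed.

Lemma bmax_ge0 (s : seq I) : 0 <= \big[Num.max/0]_(i <- s) T i.
Proof.
elim: s => [|a s IH]; first by rewrite big_nil.
by rewrite big_cons; case: (max_facts (T0 a) IH).
Qed.

Lemma bmax_ub (s : seq I) i : i \in s -> T i <= \big[Num.max/0]_(j <- s) T j.
Proof.
elim: s => [|a s IH] //; rewrite in_cons big_cons => /orP [/eqP -> | his].
  by case: (max_facts (T0 a) (bmax_ge0 s)).
case: (max_facts (T0 a) (bmax_ge0 s)) => _ h _.
exact: le_trans (IH his) h.
Qed.

Lemma bmax_att (s : seq I) : \big[Num.max/0]_(j <- s) T j = 0 \/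
   exists2 i, i \in s & \big[Num.max/0]_(j <- s) T j = T i.
Proof.
elim: s => [|a s IH]; first by left; rewrite big_nil.
rewrite big_cons maxElt; case: ifP => _.
  case: IH => [->|[i hi ->]]; [left | right; exists i] => //.
  by rewrite in_cons hi orbT.
by right; exists a; rewrite ?in_cons ?eqxx.
Qed.
End MaxL.

Section Gen.
Variables (K : numFieldType) (cj : {rmorphism K -> K}) (sq : K -> K).
Hypothesis cjK : involutive cj.
Hypothesis cj_nrm : forall a, a * cj a = `|a| ^+ 2.
Hypothesis sq_ge0 : forall x, 0 <= x -> 0 <= sq x.
Hypothesis sq_lt : forall x y, 0 <= x -> 0 <= y -> sq x < sq y -> x < y.
Variables (n N : nat).
Implicit Types x y z : 'rV[K]_n.

Local Notation inner := (inner cj).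

Lemma innerE x y : inner x y = (x *m (map_mx cj y)^T) 0 0.
Proof. by rewrite /inner !mxE; apply: eq_bigr => k _; rewrite !mxE. Qed.

Lemma inner_mulmx m x y (Z : 'M_(1, m)) :
  x *m ((map_mx cj y)^T *m Z) = inner x y *: Z.
Proof. by rewrite mulmxA [x *m _]mx11_scalar -innerE mul_scalar_mx. Qed.

Lemma inner_conj x y : cj (inner x y) = inner y x.
Proof.
by rewrite /inner rmorph_sum; apply: eq_bigr => k _; rewrite rmorphM cjK mulrC.
Qed.

Lemma inner_ge0 x : 0 <= inner x x.
Proof. by apply: sumr_ge0 => k _; rewrite cj_nrm exprn_ge0. Qed.

Lemma inner_eq0 x : inner x x = 0 -> x = 0.
Proof.
move=> h; apply/rowP => k; rewrite mxE.
have hp : forall j : 'I_n, true -> 0 <= x 0 j * cj (x 0 j).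
  by move=> j _; rewrite cj_nrm exprn_ge0.
move: (psumr_eq0P hp h (i:=k) isT).
by rewrite cj_nrm => /eqP; rewrite sqrf_eq0 normr_eq0 => /eqP.
Qed.

Lemma innerDl x y z : inner (x + y) z = inner x z + inner y z.
Proof. by rewrite /inner -big_split; apply: eq_bigr => k _; rewrite mxE mulrDl. Qed.

Lemma innerDr x y z : inner x (y + z) = inner x y + inner x z.
Proof. by rewrite /inner -big_split; apply: eq_bigr => k _; rewrite mxE rmorphD mulrDr. Qed.

Lemma inner0r x : inner x 0 = 0.
Proof. by rewrite /inner big1 // => k _; rewrite mxE rmorph0 mulr0. Qed.

Lemma inner_mulr x y (A : 'M_n) : inner x (y *m A) = inner (x *m (map_mx cj A)^T) y.
Proof. by rewrite !innerE map_mxM trmx_mul mulmxA. Qed.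

Lemma inner_trace x y : inner x y = \tr ((map_mx cj y)^T *m x).
Proof.
rewrite /inner /mxtrace; apply: eq_bigr => k _.
by rewrite !mxE big_ord1 !mxE mulrC.
Qed.

Lemma mapK m p (A : 'M[K]_(m, p)) : map_mx cj (map_mx cj A) = A.
Proof. by apply/matrixP => i j; rewrite !mxE cjK. Qed.

Lemma op_zero (M : 'M[K]_n) : (forall x, x *m M = 0) -> M = 0.
Proof.
move=> h; apply/row_matrixP => i; by rewrite rowE h row0.
Qed.

Variable F : 'I_N -> 'rV[K]_n.
Local Notation S := (frame_mx cj F).

Lemma frame_mul x : x *m S = \sum_i inner x (F i) *: F i.
Proof. by rewrite /frame_mx mulmx_sumr; apply: eq_bigr => i _; exact: inner_mulmx. Qed.

Lemma sum_inner_zero (u : 'I_N -> 'rV_n) (B : 'M_n) :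
  \sum_i (map_mx cj (F i))^T *m u i = 0 -> \sum_i inner (u i) (F i *m B) = 0.
Proof.
move=> h.
under eq_bigr do rewrite inner_trace map_mxM trmx_mul -mulmxA.
by rewrite -linear_sum -mulmx_sumr h mulmx0 linear0.
Qed.

Hypothesis hF : is_frame F.

Lemma Sx0 x : x *m S = 0 -> x = 0.
Proof.
move=> h.
have h0 : (x *m S *m (map_mx cj x)^T) 0 0 = 0 by rewrite h mul0mx mxE.
move: h0; rewrite frame_mul mulmx_suml summxE.
under eq_bigr do rewrite -scalemxAl mxE -innerE -(inner_conj x).
move=> h0.
have hi : forall i, inner x (F i) = 0.
  have hp : forall j : 'I_N, true -> 0 <= inner x (F j) * cj (inner x (F j)).
    by move=> j _; rewrite cj_nrm exprn_ge0.
  move=> i; move: (psumr_eq0P hp h0 (i:=i) isT).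
  by rewrite cj_nrm => /eqP; rewrite sqrf_eq0 normr_eq0 => /eqP.
have hk : (1%:M <= kermx (map_mx cj x)^T)%MS.
  move: hF; rewrite /is_frame => /andP [_ h1].
  apply: submx_trans h1 _; apply/sumsmx_subP => i _; rewrite genmxE.
  apply/sub_kermxP; apply/matrixP => a b; rewrite !ord1.
  by rewrite -innerE -inner_conj hi rmorph0 mxE.
have : (x <= kermx (map_mx cj x)^T)%MS by apply: submx_trans hk; exact: submx1.
move/sub_kermxP => hx; apply: inner_eq0.
by rewrite innerE hx mxE.
Qed.

Lemma S_unit : S \in unitmx.
Proof.
rewrite -row_free_unit -kermx_eq0; apply/eqP/row_matrixP => i; rewrite row0.
by apply: Sx0; apply/sub_kermxP; exact: row_sub.
Qed.

Local Notation Si := (invmx S).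
Local Notation g := (canonical_dual cj F).

Lemma S_adj : (map_mx cj S)^T = S.
Proof.
rewrite /frame_mx; apply/matrixP => a b; rewrite !mxE !summxE rmorph_sum.
apply: eq_bigr => i _; rewrite !mxE !big_ord1 !mxE rmorphM cjK mulrC.
done.
Qed.

Lemma Si_adj : (map_mx cj Si)^T = Si.
Proof.
have h1 : S *m (map_mx cj Si)^T = 1%:M.
  by rewrite -{1}S_adj -trmx_mul -map_mxM mulVmx ?S_unit // map_mx1 trmx1.
by rewrite -[LHS](mulKmx S_unit) h1 mulmx1.
Qed.

Lemma dual1 x : x = synthesis g (analysis cj F x).
Proof.
rewrite /synthesis /analysis /canonical_dual.
under eq_bigr do rewrite scalemxAl.
by rewrite -mulmx_suml -frame_mul mulmxK // S_unit.
Qed.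

Lemma dual2 x : x = synthesis F (analysis cj g x).
Proof.
rewrite /synthesis /analysis /canonical_dual.
under eq_bigr do rewrite inner_mulr Si_adj.
by rewrite -frame_mul mulmxKV // S_unit.
Qed.

Lemma dual_canon : is_dual cj F g.
Proof.
split; last by move=> f; split; [exact: dual1 | exact: dual2].
rewrite /is_frame; apply/andP; split; first exact: submx1.
apply/row_subP => k; set v := row k _.
rewrite (dual1 v) /synthesis; apply: summx_sub => i _; apply: scalemx_sub.
by apply: (sumsmx_sup i) => //; rewrite genmxE.
Qed.


Lemma main (q : 'I_N -> K) : weight_numbers n q -> prop4p1_claim cj sq q F.
Proof.
case=> p [[hp01 hp1] [n0 hq]].
have q0 : forall i, 0 <= q i.
  move=> i; case: (hq i) => _ ->; rewrite hp1.
  have /andP [_ hp] := hp01 i.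
  apply: mulr_ge0; first by apply: divr_ge0 => //; rewrite subr_ge0.
  by apply: divr_ge0; exact: ler0n.
have vn0 : forall v : 'rV[K]_n, 0 <= sq (inner v v).
  by move=> v; apply: sq_ge0; apply: inner_ge0.
rewrite /prop4p1_claim /=.
set c := \big[Num.max/0]_(i0 < N) _.
set rho1 := [set i | _].
move=> hI; split; first exact: dual_canon.
move=> G' hG'.
rewrite /d1 -/c.
have T0 : forall i, 0 <= q i * vnorm cj sq (F i) * vnorm cj sq (canonical_dual cj F i).
  by move=> i; rewrite /vnorm !mulr_ge0 ?vn0.
have T'0 : forall i, 0 <= q i * vnorm cj sq (F i) * vnorm cj sq (G' i).
  by move=> i; rewrite /vnorm !mulr_ge0 ?vn0.
set c' := \big[Num.max/0]_(i < N) _.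
have c0 : 0 <= c by exact: bmax_ge0 T0 _.
have c'0 : 0 <= c' by exact: bmax_ge0 T'0 _.
rewrite real_leNgt ?ger0_real //; apply/negP => hlt.
have cpos : 0 < c := le_lt_trans c'0 hlt.
have [hc0 | [i0 _ hci0]] := bmax_att (fun i => q i * vnorm cj sq (F i) * vnorm cj sq (canonical_dual cj F i)) (index_enum 'I_N).
  by move: cpos; rewrite /c hc0 ltxx.
have i0rho : i0 \in rho1 by rewrite inE -hci0.
pose g := canonical_dual cj F.
have key : forall i, i \in rho1 -> inner (G' i) (G' i) < inner (g i) (g i).
  move=> i; rewrite inE => /eqP hi.
  have h1 : q i * vnorm cj sq (F i) * vnorm cj sq (G' i) <
            q i * vnorm cj sq (F i) * vnorm cj sq (g i).
    rewrite /g hi; apply: le_lt_trans hlt; exact: (bmax_ub T'0 (mem_index_enum i)).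
  rewrite /g in h1.
  move: h1 hi; set a := q i * vnorm cj sq (F i) => h1 hi.
  have a0 : 0 < a.
    rewrite lt0r mulr_ge0 ?q0 ?vn0 // andbT; apply/eqP => ha.
    by move: cpos; rewrite -hi ha mul0r ltxx.
  rewrite ltr_pM2l // in h1.
  by apply: sq_lt => //; exact: inner_ge0.
pose u := fun i => G' i - g i.
have hu : \sum_i (map_mx cj (F i))^T *m u i = 0.
  apply: op_zero => x; rewrite mulmx_sumr.
  under eq_bigr do rewrite inner_mulmx /u scalerBr.
  rewrite sumrB; case: hG' => _ /(_ x) [h1 _].
  rewrite /synthesis /analysis in h1; rewrite -h1.
  by have := dual1 x; rewrite /synthesis /analysis => <-; rewrite subrr.
have hI0 : (span_of F rho1 :&: span_of F (~: rho1))%MS = 0.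
  by move: hI => /andP [h _]; apply/eqP; rewrite -submx0.
have s1 : \sum_(i in rho1) inner (u i) (g i) = 0.
  rewrite -[RHS](sum_inner_zero (proj_mx (span_of F rho1) (span_of F (~: rho1)) *m invmx S) hu).
  rewrite big_mkcond; apply: eq_bigr => i _; rewrite mulmxA /g /canonical_dual; case: ifP => hi.
    by rewrite proj_mx_id // /span_of (sumsmx_sup i) // genmxE.
  by rewrite proj_mx_0 ?mul0mx ?inner0r // /span_of (sumsmx_sup i) ?genmxE // inE hi.
have s2 : \sum_(i in rho1) inner (g i) (u i) = 0.
  have -> : \sum_(i in rho1) inner (g i) (u i) = cj (\sum_(i in rho1) inner (u i) (g i)).
    by rewrite rmorph_sum; apply: eq_bigr => i _; rewrite inner_conj.
  by rewrite s1 rmorph0.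
pose X i := inner (g i) (u i) + inner (u i) (g i) + inner (u i) (u i).
have hneg : forall i, i \in rho1 -> X i < 0.
  move=> i hi; have := key i hi.
  have -> : G' i = g i + u i by rewrite /u addrC subrK.
  by rewrite /X innerDl !innerDr -!addrA gtrDl !addrA.
have hsum : \sum_(i in rho1) X i < 0.
  rewrite (bigD1 i0) //=.
  have hle : \sum_(i in rho1 | i != i0) X i <= \sum_(i in rho1 | i != i0) (0:K).
    by apply: ler_sum => i /andP [hi _]; apply: ltW; apply: hneg.
  rewrite big1_eq in hle.
  by have := ltr_leD (hneg i0 i0rho) hle; rewrite addr0.
move: hsum; rewrite /X !big_split /= s2 s1 !add0r.
have : 0 <= \sum_(i in rho1) inner (u i) (u i) by apply: sumr_ge0 => i _; exact: inner_ge0.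
by move=> h1 h2; move: (le_lt_trans h1 h2); rewrite ltxx.
Qed.
End Gen.

Theorem proposition4p1 :
  (* real Hilbert space of dimension n *)
  (forall (R : rcfType) (n N : nat) (F : 'I_N -> 'rV[R]_n) (q : 'I_N -> R),
      (n <= N)%N ->
      is_frame F ->
      weight_numbers n q ->
      prop4p1_claim id Num.sqrt q F) /\
  (* complex Hilbert space of dimension n *)
  (forall (C : numClosedFieldType) (n N : nat) (F : 'I_N -> 'rV[C]_n)
          (q : 'I_N -> C),
      (n <= N)%N ->
      is_frame F ->
      weight_numbers n q ->
      prop4p1_claim Num.conj sqrtC q F).
Proof.
split.
- move=> R n N F q _ hF hq.
  apply: (@main R idfun Num.sqrt _ _ _ _ n N F hF q hq).
  + by [].
  + by move=> a; rewrite /= real_normK ?num_real // expr2.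
  + by move=> x _; exact: sqrtr_ge0.
  + move=> x y hx hy h.
    have hy0 : 0 < y by rewrite -sqrtr_gt0; apply: le_lt_trans h; exact: sqrtr_ge0.
    by rewrite ltr_sqrt in h.
- move=> C n N F q _ hF hq.
  apply: (@main C Num.conj sqrtC _ _ _ _ n N F hF q hq).
  + exact: conjCK.
  + by move=> a; rewrite normCK.
  + by move=> x hx; rewrite sqrtC_ge0.
  + by move=> x y hx hy; rewrite ltr_sqrtC ?nnegrE.
Qed.
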